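(* For every $m\ge 0$, the following identity holds in $A_{M,M^\perp}$: \[ \delta^m=\sum_{(\mathcal F|\mathcal G,\mathbf e)\in\mathcal T^m}x_{\mathcal F|\mathcal G}, \] where $\mathcal T^m$ is the set of pairs $(\mathcal F|\mathcal G,\mathbf e)$ such that $\mathcal F|\mathcal G$ is a biflag of length $m$, with biflats indexed $F_1|G_1,\dots,F_m|G_m$ so that $F_1\subseteq\cdots\subseteq F_m$ and $G_1\supseteq\cdots\supseteq G_m$, and $\mathbf e=(e_1,\dots,e_m)$ is a sequence of distinct elements of $E$ with, for every $1\le i\le m$, \[ e_i\in F_i\cap G_i\quad\text{and}\quad e_i=\max\Big(E-\bigcup_{j:\,e_j>e_i}(F_j\cap G_j)\Big). \]
   Context: Let $M$ be a matroid with no loops and no coloops on the ground set $E=\{0,1,\dots,n\}$, totally ordered by the usual order of integers; $M^\perp$ its dual. A biflat of $M$ is a pair $F|G$ where $F$ is a flat of $M$, $G$ is a flat of $M^\perp$, both are nonempty, they are not both equal to $E$, and $F\cup G=E$. Two biflats $F|G$, $F'|G'$ are compatible if ($F\subseteq F'$ and $G\supseteq G'$) or ($F\supseteq F'$ and $G\subseteq G'$). A biflag is a set of pairwise compatible biflats with $\bigcup_{F|G}(F\cap G)\neq E$; its length is its number of biflats. Conormal Chow ring: $S$ is the polynomial ring over $\mathbb R$ in variables $x_{F|G}$, one per biflat; $x_{\mathcal F|\mathcal G}=\prod_{F|G\in\mathcal F|\mathcal G}x_{F|G}$ for a set of biflats. For $i\in E$, $\gamma_i=\sum_{i\in F,\,F\neq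 E}x_{F|G}$, $\bar\gamma_i=\sum_{i\in G,\,G\neq E}x_{F|G}$, $\delta_i=\sum_{i\in F\cap G}x_{F|G}$. $I$ is generated by the $x_{\mathcal F|\mathcal G}$ for sets of biflats that are not biflags, $J$ by all $\gamma_i-\gamma_j$, $\bar\gamma_i-\bar\gamma_j$; $A_{M,M^\perp}=S/(I+J)$, and $\delta$ denotes the common class of all $\delta_i$. *)

(* Defs.v *)
From Stdlib Require Import Rdefinitions.
From HB Require Import structures.
From mathcomp Require Import all_boot all_order all_algebra.
From mathcomp Require Import Rstruct.
From mathcomp Require Import mpoly.

Set Implicit Arguments.
Unset Strict Implicit.
Unset Printing Implicit Defensive.

Import Order.TTheory GRing.Theory.
Local Open Scope ring_scope.

(* Ground set E = {0,...,n}, modelled as 'I_n.+1 with the usual order. *)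
Notation gset n := ('I_n.+1).

Definition basis_exchange (T : finType) (Bs : {set {set T}}) : Prop :=
  forall B1 B2, B1 \in Bs -> B2 \in Bs -> forall x, x \in B1 :\: B2 ->
    exists2 y, y \in B2 :\: B1 & (y |: (B1 :\ x)) \in Bs.

Record matroid (n : nat) := Matroid {
  bases : {set {set gset n}};
  bases_nonempty : bases != set0;
  bases_exchange : basis_exchange bases }.

Definition rk (T : finType) (Bs : {set {set T}}) (A : {set T}) : nat :=
  \max_(b in Bs) #|A :&: b|.

Definition is_flat (T : finType) (Bs : {set {set T}}) (F : {set T}) : bool :=
  [forall x, (x \notin F) ==> (rk Bs F < rk Bs (x |: F))%N].

Definition dual_bases (T : finType) (Bs : {set {set T}}) : {set {set T}} :=
  [set ~: b | b in Bs].

Definition flat n (M : matroid n) (F : {set gset n}) : bool :=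
  is_flat (bases M) F.
Definition dual_flat n (M : matroid n) (G : {set gset n}) : bool :=
  is_flat (dual_bases (bases M)) G.

Definition no_loops n (M : matroid n) : Prop :=
  forall x : gset n, exists2 b, b \in bases M & x \in b.
Definition no_coloops n (M : matroid n) : Prop :=
  forall x : gset n, exists2 b, b \in bases M & x \notin b.

Definition is_biflat n (M : matroid n) (p : {set gset n} * {set gset n}) : bool :=
  [&& flat M p.1, dual_flat M p.2, p.1 != set0, p.2 != set0,
      ~~ ((p.1 == setT) && (p.2 == setT)) & p.1 :|: p.2 == setT].

Definition biflat n (M : matroid n) : finType :=
  {p : {set gset n} * {set gset n} | is_biflat M p}.

Definition bF n (M : matroid n) (b : biflat M) : {set gset n} := (val b).1.
Definition bG n (M : matroid n) (b : biflat M) : {set gset n} := (val b).2.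

Definition compatible n (M : matroid n) (b b' : biflat M) : bool :=
  ((bF b \subset bF b') && (bG b' \subset bG b)) ||
  ((bF b' \subset bF b) && (bG b \subset bG b')).

Definition is_biflag n (M : matroid n) (S : {set biflat M}) : bool :=
  [forall b in S, forall b' in S, compatible b b'] &&
  (\bigcup_(b in S) (bF b :&: bG b) != setT).

Definition Spoly n (M : matroid n) := {mpoly R[#|biflat M|]}.

Definition xv n (M : matroid n) (b : biflat M) : Spoly M := 'X_(enum_rank b).

Definition xset n (M : matroid n) (S : {set biflat M}) : Spoly M :=
  \prod_(b in S) xv b.

Definition gamma n (M : matroid n) (i : gset n) : Spoly M :=
  \sum_(b | (i \in bF b) && (bF b != setT)) xv b.
Definition gammabar n (M : matroid n) (i : gset n) : Spoly M :=
  \sum_(b | (i \in bG b) && (bG b != setT)) xv b.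
Definition delta n (M : matroid n) (i : gset n) : Spoly M :=
  \sum_(b | i \in bF b :&: bG b) xv b.

Definition IJ_gen n (M : matroid n) (q : Spoly M) : Prop :=
  (exists S : {set biflat M}, ~~ is_biflag S /\ q = xset S) \/
  (exists i j, q = gamma M i - gamma M j) \/
  (exists i j, q = gammabar M i - gammabar M j).

Definition in_ideal (A : comRingType) (gen : A -> Prop) (p : A) : Prop :=
  exists s : seq (A * A), (forall q, q \in s -> gen q.2) /\
    p = \sum_(q <- s) q.1 * q.2.

Definition eq_in_A n (M : matroid n) (p q : Spoly M) : Prop :=
  in_ideal (@IJ_gen n M) (p - q).

Definition in_Tm n (M : matroid n) (m : nat)
    (fe : {ffun 'I_m -> biflat M} * {ffun 'I_m -> gset n}) : bool :=
  let f := fe.1 in let e := fe.2 in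
  [&& injectiveb f,
      [forall i : 'I_m, forall j : 'I_m, (i <= j)%N ==>
          ((bF (f i) \subset bF (f j)) && (bG (f j) \subset bG (f i)))],
      is_biflag [set f i | i : 'I_m],
      injectiveb e &
      [forall i : 'I_m,
        let D := ~: \bigcup_(j : 'I_m | (e i < e j)%N) (bF (f j) :&: bG (f j)) in
        [&& e i \in bF (f i) :&: bG (f i), e i \in D &
            [forall x in D, (x <= e i)%N]]]].

(* Main.v *)
Require Import Defs.
From Stdlib Require Import Rdefinitions.
From HB Require Import structures.
From mathcomp Require Import all_boot all_order all_algebra.
From mathcomp Require Import Rstruct.
From mathcomp Require Import mpoly.
From mathcomp Require Import zify ring.
Set Implicit Arguments.
Unset Strict Implicit.
Unset Printing Implicit Defensive.
Import Order.TTheory GRing.Theory.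
Local Open Scope ring_scope.

Section Ideal.
Variables (A : comRingType) (gen : A -> Prop).
Let Id := in_ideal gen.
Lemma id0 : Id 0.
Proof. by exists [::]; split => //; rewrite big_nil. Qed.
Lemma idD p q : Id p -> Id q -> Id (p + q).
Proof.
move=> [s [hs ->]] [t [ht ->]]; exists (s ++ t); split; last by rewrite big_cat.
by move=> x; rewrite mem_cat => /orP[/hs|/ht].
Qed.
Lemma idM r p : Id p -> Id (r * p).
Proof.
move=> [s [hs ->]]; exists (map (fun q => (r * q.1, q.2)) s); split.
  move=> x /mapP[y ys ->] /=. exact: hs.
by rewrite big_map mulr_sumr; apply: eq_bigr => i _; rewrite mulrA.
Qed.
Lemma idMr r p : Id p -> Id (p * r).
Proof. by move=> h; rewrite mulrC; apply: idM. Qed.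
Lemma idN p : Id p -> Id (- p).
Proof. by move=> h; rewrite -mulN1r; apply: idM. Qed.
Lemma idG q : gen q -> Id q.
Proof.
move=> h; exists [:: (1, q)]; split; last by rewrite big_seq1 mul1r.
by move=> x; rewrite inE => /eqP ->.
Qed.
Lemma idsum (I : finType) (P : pred I) F : (forall i, P i -> Id (F i)) -> Id (\sum_(i | P i) F i).
Proof. by move=> h; apply: (big_ind Id) => //; [exact: id0|exact: idD]. Qed.
Lemma idB p q : Id p -> Id q -> Id (p - q).
Proof. by move=> hp hq; apply: idD => //; apply: idN. Qed.
End Ideal.

Lemma sum_lt m k : (\sum_(j < m) ((j : nat) < k : nat))%N = minn m k.
Proof.
elim: m => [|m IH]; first by rewrite big_ord0 min0n.
by rewrite big_ord_recr /= IH; case: (ltnP m k) => h; lia.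
Qed.

Lemma sum_down m (Q : pred 'I_m) :
  (forall j j' : 'I_m, (j' <= j)%N -> Q j -> Q j') ->
  forall j, Q j = (j < \sum_(i < m) (Q i : nat))%N.
Proof.
move=> hd j; case hQ: (Q j).
  have h1 : (\sum_(i < m) ((i : nat) < j.+1 : nat) <= \sum_(i < m) (Q i : nat))%N.
    apply: leq_sum => i _; case: (ltnP i j.+1) => //= hij.
    by rewrite (hd j i _ hQ).
  by move: h1; rewrite sum_lt; have := ltn_ord j; lia.
have h1 : (\sum_(i < m) (Q i : nat) <= \sum_(i < m) ((i : nat) < j : nat))%N.
  apply: leq_sum => i _; case hQi: (Q i) => //=; case: (ltnP i j) => // hji.
  by rewrite (hd i j hji hQi) in hQ.
by move: h1; rewrite sum_lt; have := ltn_ord j; lia.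
Qed.

Lemma sum_le_m m (Q : pred 'I_m) : (\sum_(i < m) (Q i : nat) <= m)%N.
Proof.
have h : (\sum_(i < m) (Q i : nat) <= \sum_(i < m) ((i : nat) < m : nat))%N.
  by apply: leq_sum => i _; rewrite ltn_ord; case: (Q i).
by move: h; rewrite sum_lt minnn.
Qed.

Lemma leq_lift2 m (k : 'I_m.+1) (j j' : 'I_m) : (lift k j <= lift k j')%N = (j <= j')%N.
Proof. by rewrite /= leq_bump2. Qed.

Lemma lift_val m (k : 'I_m.+1) (j : 'I_m) : (lift k j : nat) = (j + (k <= j))%N.
Proof. by rewrite /= /bump addnC. Qed.

Section BigLift.
Variables (R : Type) (idx : R) (op : Monoid.com_law idx).
Lemma big_lift m (k : 'I_m.+1) (P : pred 'I_m.+1) (F : 'I_m.+1 -> R) :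
  \big[op/idx]_(i | P i) F i =
  op (if P k then F k else idx) (\big[op/idx]_(j < m | P (lift k j)) F (lift k j)).
Proof.
rewrite big_mkcond (bigD1_ord k) //=; congr (op _ _).
by rewrite [RHS]big_mkcond.
Qed.
End BigLift.

Section Comb.
Variables (n : nat) (M : matroid n).
Local Notation B := (biflat M).
Local Notation E := ('I_n.+1).
Local Notation FG b := (bF b :&: bG b).

Definition cle (b b' : B) := (bF b \subset bF b') && (bG b' \subset bG b).
Definition clt (b b' : B) := (b != b') && cle b b'.

Lemma cle_refl b : cle b b.
Proof. by rewrite /cle !subxx. Qed.
Lemma cle_trans a b c : cle a b -> cle b c -> cle a c.
Proof.
by case/andP=> h1 h2 /andP[h3 h4]; rewrite /cle (subset_trans h1 h3) (subset_trans h4 h2).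
Qed.
Lemma cle_anti a b : cle a b -> cle b a -> a = b.
Proof.
case/andP=> h1 h2 /andP[h3 h4]; apply: val_inj.
rewrite [val a]surjective_pairing [val b]surjective_pairing; congr pair; apply/eqP.
  by rewrite eqEsubset h1 h3.
by rewrite eqEsubset h2 h4.
Qed.

Lemma biflag_compat (S : {set B}) a b : is_biflag S -> a \in S -> b \in S -> cle a b || cle b a.
Proof.
case/andP=> /forallP h _ ha hb; have := h a; rewrite ha /= => /forallP /(_ b).
by rewrite hb.
Qed.

Lemma biflag_sub (S S' : {set B}) : S' \subset S -> is_biflag S -> is_biflag S'.
Proof.
move=> sub /andP[/forallP hc hU]; apply/andP; split.
  apply/forallP => a; apply/implyP => ha; apply/forallP => b; apply/implyP => hb.
  have := hc a; rewrite (subsetP sub a ha) /= => /forallP /(_ b).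
  by rewrite (subsetP sub b hb).
apply: contra hU => /eqP hT; rewrite eqEsubset subsetT /= -hT.
apply/bigcupsP => b hb; exact: (bigcup_sup b (subsetP sub b hb)).
Qed.

Lemma biflag_U (S : {set B}) : is_biflag S -> \bigcup_(b in S) FG b != setT.
Proof. by case/andP. Qed.

Definition maxin (D : {set E}) (x : E) := (x \in D) && [forall y in D, (y <= x)%N].
Definition ed (D : {set E}) : E := odflt ord0 [pick x in D | [forall y in D, (y <= x)%N]].

Lemma maxin_uniq D x y : maxin D x -> maxin D y -> x = y.
Proof.
case/andP=> hx /forall_inP hx' /andP[hy /forall_inP hy']; apply: val_inj.
by apply/eqP; rewrite eqn_leq hx' // hy'.
Qed.
Lemma maxin_ed D x : maxin D x -> ed D = x.
Proof.
move=> hx; rewrite /ed; case: pickP => [z hz|h] /=; first exact: (maxin_uniq hz).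
by move: (h x) hx; rewrite /maxin => ->.
Qed.
Lemma ed_maxin D : D != set0 -> maxin D (ed D).
Proof.
case/set0Pn => x xD; case: (@arg_maxnP _ x (mem D) (fun y : E => (y : nat)) xD) => y yD hy.
have hm : maxin D y by apply/andP; split => //; apply/forall_inP => z zD; apply: hy.
by rewrite (maxin_ed hm).
Qed.

Definition FE m := ({ffun 'I_m -> B} * {ffun 'I_m -> E})%type.
Definition Dset m (fe : FE m) (i : 'I_m) : {set E} :=
  ~: \bigcup_(j : 'I_m | (fe.2 i < fe.2 j)%N) FG (fe.1 j).
Definition Uf m (f : {ffun 'I_m -> B}) := \bigcup_(j : 'I_m) FG (f j).
Definition imf m (f : {ffun 'I_m -> B}) := [set f i | i : 'I_m].
Definition estar m (fe : FE m) := ed (~: Uf fe.1).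
Definition mono m (f : {ffun 'I_m -> B}) :=
  [forall i : 'I_m, forall j : 'I_m, (i <= j)%N ==> cle (f i) (f j)].

Lemma in_TmE m (fe : FE m) : in_Tm fe = [&& injectiveb fe.1, mono fe.1, is_biflag (imf fe.1),
   injectiveb fe.2 & [forall i, (fe.2 i \in FG (fe.1 i)) && maxin (Dset fe i) (fe.2 i)]].
Proof. by []. Qed.

Lemma Uf_imf m (f : {ffun 'I_m -> B}) : \bigcup_(b in imf f) FG b = Uf f.
Proof.
apply/setP => x; apply/bigcupP/bigcupP => [[b /imsetP[i _ ->] hx]|[i _ hx]].
  by exists i.
by exists (f i) => //; apply/imsetP; exists i.
Qed.

Lemma imf_lift m (g : {ffun 'I_m.+1 -> B}) k :
  imf g = g k |: imf [ffun j => g (lift k j)].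
Proof.
apply/setP => x; apply/imsetP/setU1P => [[i _ ->]|[->|/imsetP[j _ ->]]].
- case: (unliftP k i) => [j ->|->]; last by left.
  by right; apply/imsetP; exists j => //; rewrite ffunE.
- by exists k.
- by exists (lift k j) => //; rewrite ffunE.
Qed.


Lemma TmP m (fe : FE m) : in_Tm fe ->
  [/\ injective fe.1, (forall i j : 'I_m, (i <= j)%N -> cle (fe.1 i) (fe.1 j)),
      is_biflag (imf fe.1), injective fe.2 &
      forall i, (fe.2 i \in FG (fe.1 i)) /\ maxin (Dset fe i) (fe.2 i)].
Proof.
rewrite in_TmE => /and5P[/injectiveP h1 /forallP h2 h3 /injectiveP h4 /forallP h5].
split => // [i j hij|i]; first by have /forallP/(_ j)/implyP := h2 i; apply.
by case/andP: (h5 i).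
Qed.

Lemma TmI m (fe : FE m) :
  injective fe.1 -> (forall i j : 'I_m, (i <= j)%N -> cle (fe.1 i) (fe.1 j)) ->
  is_biflag (imf fe.1) -> injective fe.2 ->
  (forall i, (fe.2 i \in FG (fe.1 i)) /\ maxin (Dset fe i) (fe.2 i)) -> in_Tm fe.
Proof.
move=> h1 h2 h3 h4 h5; rewrite in_TmE; apply/and5P; split => //.
- exact/injectiveP.
- by apply/forallP => i; apply/forallP => j; apply/implyP; apply: h2.
- exact/injectiveP.
- by apply/forallP => i; case: (h5 i) => -> ->.
Qed.

Definition kins m (p : FE m * B) : 'I_m.+1 :=
  inord (\sum_(j < m) (clt (p.1.1 j) p.2 : nat))%N.
Definition ins m (p : FE m * B) : FE m.+1 :=
  ([ffun i => if unlift (kins p) i is Some j then p.1.1 j else p.2],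
   [ffun i => if unlift (kins p) i is Some j then p.1.2 j else estar p.1]).
Definition kmin m (fe : FE m.+1) : 'I_m.+1 := [arg min_(i < ord0) (fe.2 i : nat)].
Definition rem m (fe : FE m.+1) : FE m * B :=
  (([ffun j => fe.1 (lift (kmin fe) j)], [ffun j => fe.2 (lift (kmin fe) j)]),
   fe.1 (kmin fe)).
Definition Pp m (p : FE m * B) :=
  [&& in_Tm p.1, estar p.1 \in FG p.2 & is_biflag (p.2 |: imf p.1.1)].

Lemma rem_ok m (fe : FE m.+1) : in_Tm fe -> Pp (rem fe) /\ ins (rem fe) = fe.
Proof.
move=> hT; have [inj1 mon bf inj2 hc] := TmP hT.
have kmin_le : forall i, (fe.2 (kmin fe) <= fe.2 i)%N.
  by move=> i; rewrite /kmin; case: arg_minnP => // j _ h; apply: h.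
set k := kmin fe in kmin_le *.
have kmin_lt : forall j : 'I_m, (fe.2 k < fe.2 (lift k j))%N.
  move=> j; rewrite ltn_neqAle kmin_le andbT; apply/negP => /eqP /val_inj /inj2 h.
  by have := neq_lift k j; rewrite -h eqxx.
set fe0 := (rem fe).1.
have hD : forall j, Dset fe0 j = Dset fe (lift k j).
  move=> j; rewrite /Dset [in RHS](big_lift _ k) ltnNge kmin_le /= set0U.
  by congr (~: _); apply: eq_big => [j0|j0 _]; rewrite /= !ffunE.
have hDk : Dset fe k = ~: Uf fe0.1.
  rewrite /Dset (big_lift _ k) ltnn /= set0U /Uf; congr (~: _).
  by apply: eq_big => [j|j _]; rewrite /= ?ffunE ?kmin_lt.
have hes : estar fe0 = fe.2 k.
  by rewrite /estar -hDk; apply: maxin_ed; case: (hc k).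
have himf : imf fe.1 = fe.1 k |: imf fe0.1 by apply: imf_lift.
have hTm0 : in_Tm fe0.
  apply: TmI.
  - by move=> j1 j2; rewrite /= !ffunE => /inj1/lift_inj.
  - by move=> j1 j2 h; rewrite /= !ffunE; apply: mon; rewrite leq_lift2.
  - by apply: biflag_sub bf; rewrite himf subsetUr.
  - by move=> j1 j2; rewrite /= !ffunE => /inj2/lift_inj.
  - by move=> j; rewrite hD /= !ffunE; apply: hc.
have hk : kins (rem fe) = k.
  rewrite /kins /=.
  have -> : (\sum_(j < m) (clt ([ffun j => fe.1 (lift k j)] j) (fe.1 k) : nat))%N
          = (\sum_(j < m) ((j : nat) < k : nat))%N.
    apply: eq_bigr => j _; rewrite ffunE; congr nat_of_bool.
    rewrite /clt.
    have -> : (fe.1 (lift k j) != fe.1 k) = true.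
      by apply/negP => /eqP /inj1 h; have := neq_lift k j; rewrite h eqxx.
    rewrite /=; case: (ltnP j k) => hjk.
      by apply: mon; rewrite lift_val; move: hjk; case: (leqP k j) => /=; lia.
    apply/negP => hc'.
    have hc2 : cle (fe.1 k) (fe.1 (lift k j)).
      by apply: mon; rewrite lift_val; move: hjk; case: (leqP k j) => /=; lia.
    have /inj1 h := cle_anti hc' hc2.
    by have := neq_lift k j; rewrite h eqxx.
  by rewrite sum_lt (minn_idPr _) ?inord_val // -ltnS ltn_ord.
split.
  apply/and3P; split => //; last by rewrite /= -himf.
  by rewrite /= hes; case: (hc k).
rewrite /ins hk [RHS]surjective_pairing; congr pair; apply/ffunP => i;
  rewrite !ffunE; case: (unliftP k i) => [j ->|->] /=; rewrite ?ffunE //.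
Qed.

Lemma ins_ok m (p : FE m * B) : Pp p -> in_Tm (ins p) /\ rem (ins p) = p.
Proof.
move: p => [[f e] b] /and3P[hT hes hbf].
have [inj1 mon bf inj2 hc] := TmP hT.
rewrite /= in inj1 mon bf inj2 hc hbf.
set es := estar (f, e) in hes *.
have hU : ~: Uf f != set0.
  move: (biflag_U bf); apply: contra => /eqP h.
  by rewrite Uf_imf -[Uf f]setCK h setC0.
have hm : maxin (~: Uf f) es := ed_maxin hU.
have hsub : forall j, FG (f j) \subset Uf f.
  by move=> j; apply: (bigcup_sup j).
have hnU : forall j, (es < e j)%N.
  move=> j; case/andP: (hm) => hesU _; have [hej hmj] := hc j.
  have hle : (es <= e j)%N.
    case/andP: hmj => _ /forall_inP; apply.
    rewrite /Dset in_setC; move: hesU; rewrite in_setC; apply: contra => hx.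
    have : \bigcup_(j2 | (e j < e j2)%N) FG (f j2) \subset Uf f.
      by apply/bigcupsP => j2 _; apply: hsub.
    by move/subsetP; apply.
  rewrite ltn_neqAle hle andbT; apply/negP => /eqP/val_inj h.
  by move: hesU; rewrite in_setC h (subsetP (hsub j) _ hej).
have hbn : b \notin imf f.
  apply/negP => /imsetP[j _ hb]; case/andP: hm; rewrite in_setC.
  by rewrite (subsetP (hsub j)) // -hb.
have hfb : forall j, (f j == b) = false.
  by move=> j; apply/negP => /eqP hj; move: hbn; rewrite -hj; case/negP; apply/imsetP; exists j.
have hQ : forall j, clt (f j) b = (j < kins ((f, e), b))%N.
  move=> j0; rewrite /kins /= inordK; last by rewrite ltnS sum_le_m.
  apply: (sum_down (Q := fun j => clt (f j) b)) => j j' hjj' /andP[_ hc'].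
  by rewrite /clt (cle_trans (mon _ _ hjj') hc') andbT hfb.
set k := kins ((f, e), b) in hQ *.
have hge : forall j : 'I_m, (k <= j)%N -> cle b (f j).
  move=> j hkj.
  have hj : f j \in b |: imf f by apply/setU1P; right; apply/imsetP; exists j.
  have /orP[h|h] := biflag_compat hbf (setU11 b (imf f)) hj; first by [].
  by have := hQ j; rewrite /clt hfb h /= => /esym; rewrite ltnNge hkj.
have e1 : forall j, (ins ((f, e), b)).1 (lift k j) = f j.
  by move=> j; rewrite ffunE -/k liftK.
have e2 : forall j, (ins ((f, e), b)).2 (lift k j) = e j.
  by move=> j; rewrite ffunE -/k liftK.
have e3 : (ins ((f, e), b)).1 k = b by rewrite ffunE -/k unlift_none.
have e4 : (ins ((f, e), b)).2 k = es by rewrite ffunE -/k unlift_none.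
set g := ins ((f, e), b) in e1 e2 e3 e4 *.
have hgf : [ffun j => g.1 (lift k j)] = f by apply/ffunP => j; rewrite ffunE e1.
have hTg : in_Tm g.
  apply: TmI.
  - move=> i1 i2; case: (unliftP k i1) => [j1 ->|->]; case: (unliftP k i2) => [j2 ->|->];
      rewrite ?e1 ?e3 //.
    + by move/inj1 ->.
    + by move=> h; move: (hfb j1); rewrite h eqxx.
    + by move=> h; move: (hfb j2); rewrite h eqxx.
  - move=> i1 i2; case: (unliftP k i1) => [j1 ->|->]; case: (unliftP k i2) => [j2 ->|->];
      rewrite ?e1 ?e3.
    + by rewrite leq_lift2; apply: mon.
    + move=> h; have : (j1 < k)%N by move: h; rewrite lift_val; case: (leqP k j1) => /=; lia.
      by rewrite -hQ => /andP[].
    + move=> h; apply: hge; move: h; rewrite lift_val; case: (leqP k j2) => /=; lia.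
    + by rewrite cle_refl.
  - by rewrite (imf_lift g.1 k) e3 hgf.
  - move=> i1 i2; case: (unliftP k i1) => [j1 ->|->]; case: (unliftP k i2) => [j2 ->|->];
      rewrite ?e2 ?e4 //.
    + by move/inj2 ->.
    + by move=> h; have := hnU j1; rewrite -h ltnn.
    + by move=> h; have := hnU j2; rewrite h ltnn.
  - move=> i; case: (unliftP k i) => [j ->|->]; rewrite ?e1 ?e2 ?e3 ?e4.
      have -> : Dset g (lift k j) = Dset (f, e) j.
        rewrite /Dset (big_lift _ k) e2 e4 ltnNge (ltnW (hnU j)) /= set0U.
        by congr (~: _); apply: eq_big => [j0|j0 _]; rewrite ?e1 ?e2.
      exact: hc.
    have -> : Dset g k = ~: Uf f.
      rewrite /Dset (big_lift _ k) e4 ltnn /= set0U /Uf.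
      by congr (~: _); apply: eq_big => [j0|j0 _]; rewrite ?e1 ?e2 ?hnU.
    by split.
split => //.
have hk : kmin g = k.
  rewrite /kmin; case: arg_minnP => // i0 _ h.
  case: (unliftP k i0) => [j hj|//]; have := h k; rewrite hj e2 e4 leqNgt hnU.
  by move/(_ isT).
rewrite /rem hk e3; congr pair; congr pair; apply/ffunP => j; rewrite ffunE ?e1 ?e2 //.
Qed.

Lemma X_lift m (g : {ffun 'I_m.+1 -> B}) (k : 'I_m.+1) :
  (\prod_(i < m.+1) xv (g i) = xv (g k) * \prod_(j < m) xv (g (lift k j)))%R.
Proof. by rewrite (bigD1_ord k). Qed.

Local Open Scope ring_scope.
Local Notation Id := (in_ideal (@IJ_gen n M)).

Lemma delta_aux (x : Spoly M) (a b c d : bool) : a || b -> c ==> a -> d ==> b -> ~~ (c && d) ->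
  (if a && b then x else 0) =
  (if a && ~~ c then x else 0) + (if b && ~~ d then x else 0) - (if ~~ c && ~~ d then x else 0).
Proof.
by case: a; case: b; case: c; case: d => //= *;
  rewrite ?addr0 ?add0r ?subr0 ?subrr ?addrK ?oppr0.
Qed.

Lemma delta_eq (i : E) : delta M i =
  gamma M i + gammabar M i - \sum_(b | (bF b != setT) && (bG b != setT)) xv b.
Proof.
rewrite /delta /gamma /gammabar [X in _ = X + _ - _]big_mkcond.
rewrite [X in _ = _ + X - _]big_mkcond [X in _ = _ - X]big_mkcond [LHS]big_mkcond.
rewrite -big_split -sumrB /=.
apply: eq_bigr => b _; rewrite in_setI.
have := valP b; rewrite /is_biflag => /and5P[_ _ _ _ /andP[hnT hU]].
apply: delta_aux.
- by move: hU; rewrite -/(bF b) -/(bG b) => /eqP/setP/(_ i); rewrite in_setU in_setT.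
- by apply/implyP => /eqP ->; rewrite in_setT.
- by apply/implyP => /eqP ->; rewrite in_setT.
- exact: hnT.
Qed.

Lemma delta_diff (i j : E) : Id (delta M i - delta M j).
Proof.
have -> : delta M i - delta M j =
   (gamma M i - gamma M j) + (gammabar M i - gammabar M j).
  rewrite !delta_eq; set C := \sum_(b | _) _.
  set g1 := gamma M i; set g2 := gamma M j; set h1 := gammabar M i; set h2 := gammabar M j.
  ring.
apply: idD; apply: idG; rewrite /IJ_gen.
  by right; left; exists i, j.
by right; right; exists i, j.
Qed.

Definition Xp m (fe : FE m) : Spoly M := \prod_(k < m) xv (fe.1 k).

Lemma not_in_U m (fe : FE m) b : in_Tm fe -> estar fe \in FG b -> b \notin imf fe.1.
Proof.
move=> hT hes; have [_ _ bf _ _] := TmP hT.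
have hU : ~: Uf fe.1 != set0.
  move: (biflag_U bf); apply: contra => /eqP h.
  by rewrite Uf_imf -[Uf fe.1]setCK h setC0.
have /andP[hm _] : maxin (~: Uf fe.1) (estar fe) := ed_maxin hU.
apply/negP => /imsetP[j _ hb]; move: hm; rewrite in_setC => /negP; apply.
by apply/bigcupP; exists j => //; rewrite -hb.
Qed.

Lemma X_xset m (fe : FE m) : injective fe.1 -> Xp fe = xset (imf fe.1).
Proof.
move=> inj; rewrite /xset /imf big_imset; last by move=> x y _ _ /inj.
by apply: eq_bigl => k; rewrite ?inE.
Qed.

Lemma sum_step m :
  Id (\sum_(fe : FE m | in_Tm fe) Xp fe * delta M (estar fe)
      - \sum_(fe : FE m.+1 | in_Tm fe) Xp fe).
Proof.
rewrite (eq_bigr (fun fe => \sum_(b | estar fe \in FG b) Xp fe * xv b)); last first.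
  by move=> fe _; rewrite /delta mulr_sumr.
rewrite (eq_bigr (fun fe => \sum_(b | (estar fe \in FG b) && is_biflag (b |: imf fe.1)) Xp fe * xv b
   + \sum_(b | (estar fe \in FG b) && ~~ is_biflag (b |: imf fe.1)) Xp fe * xv b)); last first.
  by move=> fe _; rewrite (bigID (fun b => is_biflag (b |: imf fe.1))).
rewrite big_split /= pair_big_dep /=.
have -> : \sum_(p : FE m * B | in_Tm p.1 && ((estar p.1 \in FG p.2) && is_biflag (p.2 |: imf p.1.1)))
     Xp p.1 * xv p.2 = \sum_(fe : FE m.+1 | in_Tm fe) Xp fe.
  rewrite [RHS](reindex_onto (@ins m) (@rem m)); last by move=> fe hT; case: (rem_ok hT).
  apply: eq_big => [p|p hp].
    apply/idP/idP => [hP|/andP[hT /eqP hr]].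
      by case: (ins_ok hP) => -> ->; rewrite eqxx.
    by case: (rem_ok hT); rewrite hr.
  rewrite /Xp [RHS](X_lift _ (kins p)) [LHS]mulrC; congr (_ * _).
    by rewrite ffunE unlift_none.
  by apply: eq_bigr => j _; rewrite ffunE liftK.
rewrite [_ + _ - _]addrC addKr.
apply: idsum => fe hT; apply: idsum => b /andP[hes hnb]; apply: idG; left.
exists (b |: imf fe.1); split => //.
have [inj _ _ _ _] := TmP hT.
by rewrite /xset big_setU1 /= ?(not_in_U hT hes) // (X_xset inj) mulrC.
Qed.

End Comb.

Unset Implicit Arguments.
Theorem mainTheorem7 (n : nat) (M : matroid n)
  (hloops : no_loops M) (hcoloops : no_coloops M) (m : nat) (i : 'I_n.+1) :
  eq_in_A (delta M i ^+ m)
    (\sum_(fe : {ffun 'I_m -> biflat M} * {ffun 'I_m -> 'I_n.+1} | in_Tm fe)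
        \prod_(k < m) xv (fe.1 k)).
Proof.
rewrite /eq_in_A.
change (in_ideal (@IJ_gen n M) (delta M i ^+ m - \sum_(fe : FE M m | in_Tm fe) Xp fe)).
elim: m => [|m IH].
  have ord0F : forall (k : 'I_0), False by case.
  have -> : \sum_(fe : FE M 0 | in_Tm fe) Xp fe = 1.
    rewrite (eq_bigl (fun fe => fe \in [set: FE M 0])) => [|fe]; last first.
      rewrite in_setT; apply: TmI => //; try by move=> k; case: (ord0F k).
      have -> : imf fe.1 = set0.
        by apply/setP => x; rewrite in_set0; apply/imsetP => [[k _ _]]; case: (ord0F k).
      apply/andP; split; first by apply/forallP => b; rewrite in_set0.
      rewrite big_set0; apply/eqP => h; have := in_setT (ord0 : 'I_n.+1).
      by rewrite -h in_set0.
    rewrite (eq_bigr (fun _ => 1)) => [|fe _]; last by rewrite /Xp big_ord0.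
    by rewrite sumr_const cardsT card_prod !card_ffun !card_ord !expn0.
  by rewrite expr0 subrr; apply: id0.
rewrite exprSr.
set R := \sum_(fe : FE M m | in_Tm fe) Xp fe.
set R' := \sum_(fe : FE M m.+1 | in_Tm fe) Xp fe.
set S := \sum_(fe : FE M m | in_Tm fe) Xp fe * delta M (estar fe).
have h2 : in_ideal (@IJ_gen n M) (R * delta M i - S).
  rewrite /R /S mulr_suml -sumrB; apply: idsum => fe _; rewrite -mulrBr; apply: idM.
  exact: delta_diff.
have h3 : in_ideal (@IJ_gen n M) (S - R') := sum_step M m.
have -> : delta M i ^+ m * delta M i - R' =
  (delta M i ^+ m - R) * delta M i + ((R * delta M i - S) + (S - R')) by ring.
by apply: idD; [apply: idMr | apply: idD].
Qed.
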